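(* Let $\Gamma$ be a connected $(Y,Y')$-bipartite graph that is distance-semiregular with respect to $Y$, with intersection numbers $b_i,c_i$ ($0\le i\le4$), and assume every vertex of $Y$ has eccentricity $4$. Let $b'_0$ denote the valency of the vertices of $Y'$. Then $\Gamma$ is the incidence graph of a $(v,b,r,k,\lambda_1,0)$ SPBIBD of type $(b_1,c_3)$ with point set $Y$ and block set $Y'$ (incidence = adjacency), where $$v=1+\frac{b_0b_1}{c_2}+\frac{b_0b_1b_2b_3}{c_2c_3c_4},\quad b=b_0+\frac{b_0b_1b_2}{c_2c_3},\quad r=b_0,\quad k=b'_0,\quad \lambda_1=c_2.$$
   Context: For a connected graph, $\Gamma_i(u)$ is the set of vertices at distance $i$ from $u$, $\Gamma(u)=\Gamma_1(u)$, $\varepsilon(u)$ the eccentricity. For $w\in\Gamma_i(u)$, $b_i(u,w)=|\Gamma_{i+1}(u)\cap\Gamma(w)|$, $c_i(u,w)=|\Gamma_{i-1}(u)\cap\Gamma(w)|$. A graph is $(Y,Y')$-bipartite if its vertex set is $Y\sqcup Y'$ with every edge joining $Y$ to $Y'$. A connected $(Y,Y')$-bipartite graph is distance-semiregular with respect to $Y$ if there are constants $b_i,c_i$ with $b_i(x,w)=b_i$ and $c_i(x,w)=c_i$ for all $x\in Y$, $0\le i\le\varepsilon(x)$, $w\in\Gamma_i(x)$; then vertices of $Y$ have valency $b_0$ and vertices of $Y'$ have valency $b_1+1$. A design $\mathcal{D}=(\mathcal{P},\mathcal{B},\mathcal{I})$ is an incidence structure with $|\mathcal{P}|=v$, $|\mathcal{B}|=b$,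 every block incident with exactly $k$ points and every point with exactly $r$ blocks. $(p,B)$ is a flag if $p\in B$, a non-flag otherwise. $\mathcal{D}$ is a $(v,b,r,k,\lambda_1,\lambda_2)$ SPBIBD of type $(s,t)$ if (i) any two distinct points are together in exactly $\lambda_1$ or exactly $\lambda_2$ blocks; (ii) for every flag $(p,B)$, the number of points of $B$ other than $p$ lying with $p$ in exactly $\lambda_1$ blocks is $s$; (iii) for every non-flag $(p,B)$, the number of points of $B$ lying with $p$ in exactly $\lambda_1$ blocks is $t$. The incidence graph is the bipartite graph on $\mathcal{P}\cup\mathcal{B}$ with $p\sim B$ iff $p\in B$. *)

(* Defs.v *)
From mathcomp Require Import all_boot all_order all_algebra.
Set Implicit Arguments. Unset Strict Implicit. Unset Printing Implicit Defensive.

Section Graphs.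
Variables (T : finType) (adj : rel T).

Definition simple_graph := symmetric adj /\ irreflexive adj.
Definition connected_graph := forall u w : T, connect adj u w.

Definition nbhd (w : T) : {set T} := [set z | adj w z].

Definition nbr_set (S : {set T}) : {set T} := [set z | [exists x in S, adj x z]].
Definition ball (n : nat) (u : T) : {set T} :=
  iter n (fun S => S :|: nbr_set S) [set u].

(* graph distance: least n with w in ball n u (equals #|T| if unreachable) *)
Definition dist (u w : T) : nat := find (fun n => w \in ball n u) (iota 0 #|T|).

Definition Gam (i : nat) (u : T) : {set T} := [set w | dist u w == i].

Definition ecc (u : T) : nat := \max_(w : T) dist u w.

Definition b_at (i : nat) (u w : T) : nat := #|Gam i.+1 u :&: nbhd w|.
Definition c_at (i : nat) (u w : T) : nat := #|Gam i.-1 u :&: nbhd w|.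

Definition bipartite_wrt (Y : {set T}) :=
  forall x y, adj x y -> (x \in Y) != (y \in Y).

Definition dist_semiregular (Y : {set T}) (b c : nat -> nat) :=
  forall x, x \in Y -> forall i, i <= ecc x -> forall w, w \in Gam i x ->
    b_at i x w = b i /\ c_at i x w = c i.

Definition lam (B : {set T}) (I : rel T) (p q : T) : nat :=
  #|[set B0 in B | I p B0 && I q B0]|.

Definition SPBIBD (P B : {set T}) (I : rel T)
    (v bb r k l1 l2 s t : nat) : Prop :=
  #|P| = v /\ #|B| = bb /\
  (forall B0, B0 \in B -> #|[set p in P | I p B0]| = k) /\
  (forall p, p \in P -> #|[set B0 in B | I p B0]| = r) /\
  (forall p q, p \in P -> q \in P -> p != q ->
     lam B I p q = l1 \/ lam B I p q = l2) /\
  (forall p B0, p \in P -> B0 \in B -> I p B0 ->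
     #|[set q in P | I q B0 && (q != p) && (lam B I p q == l1)]| = s) /\
  (forall p B0, p \in P -> B0 \in B -> ~~ I p B0 ->
     #|[set q in P | I q B0 && (lam B I p q == l1)]| = t).

End Graphs.

(* Main.v *)
Require Import Defs.
From mathcomp Require Import all_boot all_order all_algebra.
From mathcomp Require Import zify.
Import GRing.Theory Num.Theory.

Section G.
Variables (T : finType) (adj : rel T) (Y : {set T}).
Hypothesis sym : symmetric adj.
Hypothesis irr : irreflexive adj.
Hypothesis conn : connected_graph adj.
Hypothesis bip : bipartite_wrt adj Y.

Lemma in_ballS n u w : (w \in ball adj n.+1 u) =
  (w \in ball adj n u) || [exists z in ball adj n u, adj z w].
Proof. by rewrite /ball iterS in_setU /nbr_set inE. Qed.

Lemma ball0 u w : (w \in ball adj 0 u) = (w == u).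
Proof. by rewrite /ball /= inE. Qed.

Lemma ball_mono m n u : m <= n -> ball adj m u \subset ball adj n u.
Proof.
move/subnK <-; elim: (n - m) => [|k IH]; first by rewrite add0n.
rewrite addSn /ball iterS; apply: subset_trans IH (subsetUl _ _).
Qed.

Lemma path_ball u p : path adj u p -> last u p \in ball adj (size p) u.
Proof.
elim/last_ind: p => [|p x IH]; first by rewrite /= ball0.
rewrite rcons_path last_rcons size_rcons => /andP[/IH H a].
rewrite in_ballS; apply/orP; right; apply/existsP; exists (last u p); by rewrite H.
Qed.

Lemma reach u w : exists2 n, n < #|T| & w \in ball adj n u.
Proof.
have /connectP[p pth ->] := conn u w.
case/shortenP: pth => p' pth' uq _.
exists (size p'); last exact: path_ball.
by have := max_card (mem (u :: p')); rewrite (card_uniqP uq).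
Qed.

Lemma distP u w n : (dist adj u w <= n) = (w \in ball adj n u).
Proof.
have [m mT wm] := reach u w.
have hs : has (fun n => w \in ball adj n u) (iota 0 #|T|).
  by apply/hasP; exists m => //; rewrite mem_iota.
have dlt : dist adj u w < #|T|.
  by rewrite /dist -[X in _ < X](size_iota 0) -has_find.
have wd : w \in ball adj (dist adj u w) u.
  by have := nth_find 0 hs; rewrite nth_iota.
case: (leqP (dist adj u w) n) => dn.
  by rewrite (subsetP (ball_mono _ _ u dn)) ?wd.
have nT : n < #|T| by apply: ltn_trans dlt.
by have := before_find 0 dn; rewrite nth_iota // add0n => ->.
Qed.

Lemma dist0 u w : (dist adj u w == 0) = (w == u).
Proof. by rewrite -leqn0 distP ball0. Qed.

Lemma dist_adj u x y : adj x y -> dist adj u y <= (dist adj u x).+1.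
Proof.
move=> axy; rewrite distP in_ballS; apply/orP; right; apply/existsP; exists x.
by rewrite -distP leqnn.
Qed.
Arguments dist_adj u {x y}.

Lemma dist_pred u w n : dist adj u w = n.+1 -> exists2 z, adj z w & dist adj u z = n.
Proof.
move=> dw.
have : w \in ball adj n.+1 u by rewrite -distP dw.
rewrite in_ballS -distP dw ltnn /= => /existsP[z /andP[zb azw]].
exists z => //; apply/eqP; rewrite eqn_leq distP zb /=.
by have := dist_adj u azw; rewrite dw ltnS.
Qed.
Arguments dist_pred {u w n}.

Lemma parity u w : u \in Y -> (w \in Y) = ~~ odd (dist adj u w).
Proof.
move=> uY; move: w; suff H : forall n w, dist adj u w = n -> (w \in Y) = ~~ odd n.
  by move=> w; exact: H.
elim=> [|n IH] w dw.
  have /eqP -> : w == u by rewrite -dist0 dw.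
  by rewrite uY.
case: (dist_pred dw) => z azw dz.
have := bip _ _ azw; rewrite (IH z dz) /=.
by case: (w \in Y); case: (odd n).
Qed.

Lemma adj_dist u x y : u \in Y -> adj x y ->
  dist adj u y = (dist adj u x).+1 \/ dist adj u x = (dist adj u y).+1.
Proof.
move=> uY axy.
have h1 := dist_adj u axy.
have ayx : adj y x by rewrite sym.
have h2 := dist_adj u ayx.
have hne : dist adj u x <> dist adj u y.
  by move=> e; have := bip _ _ axy; rewrite !(parity _ _ uY) e eqxx.
lia.
Qed.

Lemma Gam1 u w : (w \in Gam adj 1 u) = adj u w.
Proof.
rewrite inE; apply/idP/idP.
  move/eqP/dist_pred => [z azw /eqP]; rewrite dist0 => /eqP <-; done.
move=> auw; rewrite eqn_leq.
have := dist_adj u auw; rewrite (eqP (introT eqP (_ : dist adj u u = 0))) ?andbT ?lt0n => [->|]; last first.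
  by apply/eqP; rewrite dist0.
rewrite /= dist0; apply/eqP => e; by rewrite e irr in auw.
Qed.

Lemma card_setI_sum (A : {set T}) (P : pred T) :
  #|A :&: [set z | P z]| = \sum_(z in A) P z.
Proof.
rewrite -sum1_card big_mkcond /= [RHS]big_mkcond /=.
apply: eq_bigr => z _; rewrite !inE.
by case: (z \in A); case: (P z).
Qed.

Lemma dcount x i : #|Gam adj i x| * 0 = 0.
Proof. by rewrite muln0. Qed.

Lemma double_count x i :
  \sum_(w in Gam adj i x) b_at adj i x w =
  \sum_(z in Gam adj i.+1 x) c_at adj i.+1 x z.
Proof.
rewrite /b_at /c_at /nbhd.
under eq_bigr => w _ do rewrite card_setI_sum.
under [RHS]eq_bigr => z _ do rewrite card_setI_sum.
rewrite exchange_big /=; apply: eq_bigr => z _; apply: eq_bigr => w _.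
by rewrite sym.
Qed.

Lemma exm u n w : dist adj u w = n -> forall m, m <= n -> exists z, dist adj u z = m.
Proof.
elim: n w => [|n IH] w dw m.
  by rewrite leqn0 => /eqP ->; exists w.
rewrite leq_eqVlt => /orP[/eqP ->|]; first by exists w.
rewrite ltnS => mn; case: (dist_pred dw) => z _ dz; exact: IH dz m mn.
Qed.

End G.

Lemma cardsU0 (T : finType) (A B : {set T}) : A :&: B = set0 -> #|A :|: B| = #|A| + #|B|.
Proof. by move=> h; rewrite cardsU h cards0 subn0. Qed.

Section S2.
Variables (T : finType) (adj : rel T) (Y : {set T}) (b c : nat -> nat) (b0' : nat).
Hypothesis sg : simple_graph adj.
Hypothesis conn : connected_graph adj.
Hypothesis bip : bipartite_wrt adj Y.
Hypothesis Yn0 : Y != set0.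
Hypothesis dsr : dist_semiregular adj Y b c.
Hypothesis eccY : forall x, x \in Y -> ecc adj x = 4.
Hypothesis degY : forall y, y \in ~: Y -> #|nbhd adj y| = b0'.

Let sym : symmetric adj := proj1 sg.
Let irr : irreflexive adj := proj2 sg.
Let par := @parity T adj Y conn bip.
Let G1 := @Gam1 T adj irr conn.
Let D0 := @dist0 T adj conn.
Let DA := @dist_adj T adj conn.

Lemma d4 x w : x \in Y -> dist adj x w <= 4.
Proof. by move=> xY; rewrite -(eccY x xY) /ecc; exact: (leq_bigmax (F := dist adj x)). Qed.
Arguments d4 {x} w.

Lemma sr x i w : x \in Y -> i <= 4 -> w \in Gam adj i x ->
  b_at adj i x w = b i /\ c_at adj i x w = c i.
Proof. by move=> xY i4; apply: dsr => //; rewrite eccY. Qed.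
Arguments sr {x i w}.

Lemma ex4 x : x \in Y -> exists w, dist adj x w = 4.
Proof.
move=> xY; case: (pickP (fun w => dist adj x w == 4)) => [w /eqP|H]; first by exists w.
have : ecc adj x <= 3.
  apply/bigmax_leqP => w _; move: (d4 w xY) (H w) => /=.
  by rewrite leq_eqVlt => /orP[/eqP -> //| ]; rewrite ltnS.
by rewrite eccY.
Qed.
Arguments ex4 {x}.

Lemma exd x m : x \in Y -> m <= 4 -> exists w, dist adj x w = m.
Proof. move=> xY m4; case: (ex4 xY) => w dw; exact: (@exm T adj conn x 4 w dw m m4). Qed.
Arguments exd {x m}.

Lemma cpos x i : x \in Y -> 0 < i -> i <= 4 -> 0 < c i.
Proof.
move=> xY i0 i4; case: (exd xY i4) => w dw.
have wG : w \in Gam adj i x by rewrite inE dw.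
case: (sr xY i4 wG) => _ <-; rewrite /c_at.
case: i i0 i4 dw wG => // i _ _ dw _.
case: (@dist_pred T adj conn _ _ _ dw) => z azw dz.
by apply/card_gt0P; exists z; rewrite !inE /= dz eqxx /= sym.
Qed.
Arguments cpos {x} i.

Lemma dc x i : x \in Y -> i < 4 -> #|Gam adj i x| * b i = #|Gam adj i.+1 x| * c i.+1.
Proof.
move=> xY i4; rewrite -!sum_nat_const.
transitivity (\sum_(w in Gam adj i x) b_at adj i x w).
  by symmetry; apply: eq_bigr => w wG; case: (sr xY (ltnW i4) wG).
rewrite (@double_count T adj sym); apply: eq_bigr => z zG; by case: (sr xY i4 zG).
Qed.
Arguments dc {x} i.

Lemma g1 x : x \in Y -> #|Gam adj 1 x| = b 0.
Proof.
move=> xY.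
case: (sr xY (isT : 0 <= 4) (_ : x \in Gam adj 0 x)) => [|<- _]; first by rewrite inE D0.
rewrite /b_at; apply: eq_card => w.
by rewrite in_setI G1 /nbhd inE andbb.
Qed.
Arguments g1 {x}.

Lemma lamE p q : p \in Y -> lam (~:Y) adj p q = #|Gam adj 1 p :&: nbhd adj q|.
Proof.
move=> pY; rewrite /lam; apply: eq_card => B0.
rewrite in_setI G1 /nbhd !inE.
case apB: (adj p B0) => //=; last by rewrite andbF.
by move: (bip _ _ apB); rewrite pY; case: (B0 \in Y).
Qed.
Arguments lamE {p} q.

Lemma lamc2 p q : p \in Y -> dist adj p q = 2 -> lam (~:Y) adj p q = c 2.
Proof.
move=> pY d2; rewrite lamE //.
by case: (sr pY (isT : 2 <= 4) (_ : q \in Gam adj 2 p)) => [|_ <-]; first by rewrite inE d2.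
Qed.
Arguments lamc2 {p q}.

Lemma lam0 p q : p \in Y -> 2 < dist adj p q -> lam (~:Y) adj p q = 0.
Proof.
move=> pY d2; rewrite lamE //; apply/eqP; rewrite cards_eq0; apply/eqP/setP => B0.
rewrite in_setI /nbhd !inE; apply/negbTE/andP => [[/eqP a1 a2]].
rewrite sym in a2; have := DA p _ _ a2; rewrite a1; lia.
Qed.
Arguments lam0 {p q}.

Lemma d24 p q : p \in Y -> q \in Y -> q != p -> dist adj p q = 2 \/ dist adj p q = 4.
Proof.
move=> pY qY qp; move: qY qp (d4 q pY); rewrite (par p q pY) -D0.
case: (dist adj p q) => [|[|[|[|[|d]]]]] //=; auto.
Qed.
Arguments d24 {p q}.

Lemma lamiff p q : p \in Y -> q \in Y -> q != p ->
  (lam (~:Y) adj p q == c 2) = (dist adj p q == 2).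
Proof.
move=> pY qY qp; case: (d24 pY qY qp) => e; rewrite e.
  by rewrite (lamc2 pY e) !eqxx.
by rewrite lam0 ?e // eq_sym eqn0Ngt (cpos 2 pY).
Qed.
Arguments lamiff {p q}.


Lemma inY_of_adj p B0 : B0 \in ~: Y -> adj p B0 -> p \in Y.
Proof.
rewrite inE => B0n a; move: (bip _ _ a); rewrite (negbTE B0n).
by case: (p \in Y).
Qed.
Arguments inY_of_adj {p B0}.

Lemma notY_of_adj p B0 : p \in Y -> adj p B0 -> (B0 \in Y) = false.
Proof. by move=> pY a; move: (bip _ _ a); rewrite pY; case: (B0 \in Y). Qed.
Arguments notY_of_adj {p B0}.

Lemma spb : SPBIBD Y (~: Y) adj #|Y| #|~: Y| (b 0) b0' (c 2) 0 (b 1) (c 3).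
Proof.
split; first done; split; first done; split.
  move=> B0 B0n; rewrite -(degY B0 B0n); apply: eq_card => p; rewrite !inE (sym B0 p).
  case a: (adj p B0); rewrite ?andbF ?andbT //.
  by rewrite (inY_of_adj B0n a).
split.
  move=> p pY; rewrite -(g1 pY); apply: eq_card => B0; rewrite G1 !inE.
  case a: (adj p B0); rewrite ?andbF ?andbT //.
  by rewrite (notY_of_adj pY a).
split.
  move=> p q pY qY qp; rewrite eq_sym in qp.
  case: (d24 pY qY qp) => e; [left; exact: lamc2 pY e | right; apply: lam0 => //; by rewrite e].
split.
  move=> p B0 pY B0n a.
  have B0G : B0 \in Gam adj 1 p by rewrite G1.
  rewrite -(proj1 (sr pY (isT : 1 <= 4) B0G)) /b_at; apply: eq_card => q.
  rewrite in_setI /nbhd !inE (sym B0 q).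
  case aq: (adj q B0); rewrite ?andbF ?andbT //=.
  rewrite (inY_of_adj B0n aq) /=.
  case: (eqVneq q p) => [->|qp] /=.
    by have := D0 p p; rewrite eqxx => /eqP ->.
  by rewrite lamiff // (inY_of_adj B0n aq).
move=> p B0 pY B0n na.
have B0G : B0 \in Gam adj 3 p.
  move: B0n na (d4 B0 pY); rewrite inE (par p B0 pY) -G1 !inE negbK.
  by case: (dist adj p B0) => [|[|[|[|[|d]]]]] //=.
rewrite -(proj2 (sr pY (isT : 3 <= 4) B0G)) /c_at; apply: eq_card => q.
rewrite in_setI /nbhd !inE (sym B0 q).
case aq: (adj q B0); rewrite ?andbF ?andbT //=.
rewrite (inY_of_adj B0n aq) /= lamiff ?(inY_of_adj B0n aq) //.
by apply/eqP => e; move: na; rewrite -e aq.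
Qed.

Lemma GamI x i j : i != j -> Gam adj i x :&: Gam adj j x = set0.
Proof.
move=> ij; apply/setP => w; rewrite !inE; apply/negbTE/andP => [[/eqP e1 /eqP e2]].
by rewrite -e1 e2 eqxx in ij.
Qed.

Lemma counts x : x \in Y ->
  #|Y| = 1 + #|Gam adj 2 x| + #|Gam adj 4 x| /\ #|~: Y| = #|Gam adj 1 x| + #|Gam adj 3 x|.
Proof.
move=> xY; split.
  have -> : Y = (Gam adj 0 x :|: Gam adj 2 x) :|: Gam adj 4 x.
    apply/setP => w; rewrite !inE (par x w xY); move: (d4 w xY).
    by case: (dist adj x w) => [|[|[|[|[|d]]]]].
  rewrite cardsU0; last first.
    by rewrite setIUl !GamI ?setU0.
  rewrite cardsU0 ?GamI //.
  have -> : Gam adj 0 x = [set x] by apply/setP => w; rewrite !inE D0.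
  by rewrite cards1.
have -> : ~: Y = Gam adj 1 x :|: Gam adj 3 x.
  apply/setP => w; rewrite !inE (par x w xY); move: (d4 w xY).
  by case: (dist adj x w) => [|[|[|[|[|d]]]]].
by rewrite cardsU0 ?GamI.
Qed.

End S2.

From mathcomp Require Import ring.
Local Open Scope ring_scope.

Theorem lemma5p1 (T : finType) (adj : rel T) (Y : {set T})
    (b c : nat -> nat) (b0' : nat) :
  simple_graph adj ->
  connected_graph adj ->
  bipartite_wrt adj Y ->
  Y != set0 ->
  dist_semiregular adj Y b c ->
  (forall x, x \in Y -> ecc adj x = 4%N) ->
  (forall y, y \in ~: Y -> #|nbhd adj y| = b0') ->
  let v := #|Y| in let bb := #|~: Y| in
  [/\ SPBIBD Y (~: Y) adj v bb (b 0%N) b0' (c 2%N) 0 (b 1%N) (c 3%N),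
      (v%:R : rat) = 1 + ((b 0%N * b 1%N)%:R / (c 2%N)%:R)
                       + ((b 0%N * b 1%N * b 2%N * b 3%N)%:R
                          / (c 2%N * c 3%N * c 4%N)%:R)
    & (bb%:R : rat) = (b 0%N)%:R
                      + (b 0%N * b 1%N * b 2%N)%:R / (c 2%N * c 3%N)%:R].
Proof.
move=> sg conn bip Yn0 dsr eccY degY v bb.
have [x xY] := set0Pn _ Yn0.
have [cY cnY] := @counts T adj Y conn bip eccY x xY.
have e0 := @dc T adj Y b c sg dsr eccY x 0 xY isT.
have e1 := @dc T adj Y b c sg dsr eccY x 1 xY isT.
have e2 := @dc T adj Y b c sg dsr eccY x 2 xY isT.
have e3 := @dc T adj Y b c sg dsr eccY x 3 xY isT.
have G1 := @g1 T adj Y b c sg conn dsr eccY x xY.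
have c2p := @cpos T adj Y b c sg conn dsr eccY x 2 xY isT isT.
have c3p := @cpos T adj Y b c sg conn dsr eccY x 3 xY isT isT.
have c4p := @cpos T adj Y b c sg conn dsr eccY x 4 xY isT isT.
have c2n : ((c 2%N)%:R : rat) != 0 by rewrite pnatr_eq0 -lt0n.
have c3n : ((c 3%N)%:R : rat) != 0 by rewrite pnatr_eq0 -lt0n.
have c4n : ((c 4%N)%:R : rat) != 0 by rewrite pnatr_eq0 -lt0n.
rewrite G1 in e1.
have r2 : (#|Gam adj 2 x|%:R : rat) = (b 0%N * b 1%N)%:R / (c 2%N)%:R.
  by rewrite e1 natrM mulfK.
have r3 : (#|Gam adj 3 x|%:R : rat) = (#|Gam adj 2 x| * b 2%N)%:R / (c 3%N)%:R.
  by rewrite e2 natrM mulfK.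
have r4 : (#|Gam adj 4 x|%:R : rat) = (#|Gam adj 3 x| * b 3%N)%:R / (c 4%N)%:R.
  by rewrite e3 natrM mulfK.
split.
- exact: (@spb T adj Y b c b0' sg conn bip Yn0 dsr eccY degY).
- rewrite /v cY !natrD r4 natrM r3 natrM r2 !natrM.
  by field; rewrite ?c2n ?c3n ?c4n.
- rewrite /bb cnY natrD G1 r3 natrM r2 !natrM.
  by field; rewrite ?c2n ?c3n ?c4n.
Qed.
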